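(* Let $\mathbf{J}\in\mathbb{R}^{n\times n}$ be a real symmetric matrix with zero diagonal, and let $\alpha,\beta>0$ be such that $\lambda_{\min}(\mathbf{J}+\alpha\mathbf{I})>0$. Let $\{\boldsymbol{x}^{(k)}\}_{k\ge0}$ be the DOCH iterates starting from an arbitrary $\boldsymbol{x}^{(0)}\in\mathbb{R}^n$. Then $\{\boldsymbol{x}^{(k)}\}$ converges to a critical point of $\mathcal{H}$.
   Context: Let $f(\boldsymbol{x})=\frac{\beta}{4}\sum_i x_i^4$, $g(\boldsymbol{x})=\frac12\boldsymbol{x}^\top(\mathbf{J}+\alpha\mathbf{I})\boldsymbol{x}$ and $\mathcal{H}=f-g$ (equivalently $\mathcal{H}(\boldsymbol{x})=\frac{\beta}{4}\sum_i x_i^4-\frac{\alpha}{2}\sum_i x_i^2-\frac12\boldsymbol{x}^\top\mathbf{J}\boldsymbol{x}$). The DOCH iterates are defined by $\boldsymbol{x}^{(k+1)}$ being the minimizer of $F_k(\boldsymbol{x})=f(\boldsymbol{x})-g(\boldsymbol{x}^{(k)})-\nabla g(\boldsymbol{x}^{(k)})^\top(\boldsymbol{x}-\boldsymbol{x}^{(k)})$; explicitly, $\boldsymbol{x}^{(k+1)}=\varphi(\beta^{-1}(\mathbf{J}+\alpha\mathbf{I})\boldsymbol{x}^{(k)})$ with $\varphi$ the componentwise real cube root. A critical point is a point where $\nabla\mathcal{H}=\mathbf{0}$. *)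

(* Defs.v *)
From HB Require Import structures.
From mathcomp Require Import all_boot all_order all_algebra.
From mathcomp Require Import all_classical all_reals all_analysis.
Set Implicit Arguments. Unset Strict Implicit. Unset Printing Implicit Defensive.
Import Order.TTheory GRing.Theory Num.Theory.
Import numFieldNormedType.Exports.
Local Open Scope ring_scope.

Definition cbrt {R : realType} (x : R) : R := Num.sg x * (`|x| `^ (3%:R^-1)).

Definition phi {R : realType} {n : nat} (v : 'cV[R]_n) : 'cV[R]_n :=
  \col_i cbrt (v i 0).

Definition Hfun {R : realType} {n : nat} (J : 'M[R]_n) (alpha beta : R)
  (x : 'cV[R]_n) : R :=
  beta / 4%:R * (\sum_i (x i 0) ^+ 4) - alpha / 2%:R * (\sum_i (x i 0) ^+ 2)
  - 2%:R^-1 * (x^T *m J *m x) 0 0.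

Definition doch {R : realType} {n : nat} (J : 'M[R]_n) (alpha beta : R)
  (x0 : 'cV[R]_n) (k : nat) : 'cV[R]_n :=
  iter k (fun x => phi (beta^-1 *: ((J + alpha%:M) *m x))) x0.

Definition critical_point {R : realType} {n : nat} (H : 'cV[R]_n -> R)
  (x : 'cV[R]_n) : Prop :=
  differentiable H x /\ 'd H x = (fun _ => 0) :> ('cV[R]_n -> R).

(* Main.v *)
Require Import Defs.
From HB Require Import structures.
From mathcomp Require Import all_boot all_order all_algebra.
From mathcomp Require Import all_classical all_reals all_analysis.
From mathcomp Require Import ring lra.
Import Order.TTheory GRing.Theory Num.Theory.
Import numFieldNormedType.Exports.
Set Implicit Arguments. Unset Strict Implicit. Unset Printing Implicit Defensive.
Local Open Scope classical_set_scope.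
Local Open Scope ring_scope.
Section Crit.
Variable R : realType.
Variable n : nat.
Implicit Types x h : 'cV[R]_n.

Definition coordc (i : 'I_n) : 'cV[R]_n -> R := fun N => N i 0.

Lemma is_diff_coord x i : is_diff x (coordc i) (coordc i).
Proof.
have @f : {linear 'cV[R]_n -> R}.
  by exists (fun N : 'cV[R]_n => N i 0); do 2![eexists]; do ?[constructor];
     rewrite ?mxE// => ? *; rewrite ?mxE//; move=> ?; rewrite !mxE.
have -> : coordc i = f by [].
apply: DiffDef; first exact/linear_differentiable/coord_continuous.
by rewrite diff_lin //; apply: coord_continuous.
Qed.

Lemma is_diff_sum (I : finType) (f df : I -> 'cV[R]_n -> R) x :
  (forall i, is_diff x (f i) (df i)) ->
  is_diff x (\sum_i f i) (\sum_i df i).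
Proof.
move=> H.
apply: (@big_ind2 _ _ (fun a b => is_diff x a b)).
- exact: is_diff_cst.
- by move=> a b c d H1 H2; apply: is_diffD.
- by move=> i _; apply: H.
Qed.

Definition Gfun (J : 'M[R]_n) (alpha beta : R) : 'cV[R]_n -> R :=
  (beta / 4%:R) *: (\sum_i (coordc i) ^+ 4)
  - (alpha / 2%:R) *: (\sum_i (coordc i) ^+ 2)
  - 2%:R^-1 *: (\sum_j \sum_i (J i j) *: (coordc i * coordc j)).

Lemma Hfun_G J alpha beta : Hfun J alpha beta = Gfun J alpha beta.
Proof.
apply/funext => x.
rewrite /Hfun /Gfun /=.
rewrite !fct_sumE /=.
congr (_ - _ - _).
congr (_ * _); rewrite !mxE; apply: eq_bigr => j _; rewrite !mxE fct_sumE big_distrl /=.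
apply: eq_bigr => i _; rewrite !mxE /coordc /=. rewrite -[RHS]/(J i j * (x i 0 * x j 0)); ring.
Qed.

End Crit.

Section Crit2.
Variable R : realType.
Variable n : nat.

Lemma crit_of_eq (J : 'M[R]_n) (alpha beta : R) (l : 'cV[R]_n) :
  J^T = J ->
  (forall i, beta * (l i 0) ^+ 3 = \sum_j J i j * l j 0 + alpha * l i 0) ->
  critical_point (Hfun J alpha beta) l.
Proof.
move=> JT Hl.
have cd := @is_diff_coord R n l.
have hd := is_diffB (is_diffB (is_diffZ (beta / 4%:R) (is_diff_sum (fun i => is_diffX 3 (cd i))))
   (is_diffZ (alpha / 2%:R) (is_diff_sum (fun i => is_diffX 1 (cd i)))))
   (is_diffZ (2%:R^-1) (is_diff_sum (fun j => is_diff_sum (fun i => is_diffZ (J i j) (is_diffM (cd i) (cd j)))))).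
rewrite Hfun_G.
split; first exact: (ex_diff (is_diff_def := hd)).
rewrite (diff_val (is_diff_def := hd)).
apply/funext => h.
rewrite !fct_sumE /=.
have E : forall i, (\sum_(i0 < n) J i0 i *: (coordc i0 l *: coordc i + coordc i l *: coordc i0)) h
   = \sum_(i0 < n) J i0 i * (l i0 0 * h i 0 + l i 0 * h i0 0).
  by move=> i; rewrite fct_sumE.
rewrite -[LHS]/((beta / 4) * (\sum_(i < n) (4 * l i 0 ^+ 3 * h i 0)) -
  (alpha / 2) * (\sum_(i < n) (2 * l i 0 ^+ 1 * h i 0)) -
  2^-1 * (\sum_(i < n) ((\sum_(i0 < n) J i0 i *: (coordc i0 l *: coordc i + coordc i l *: coordc i0)) h))).
rewrite (eq_bigr _ (fun i _ => E i)).
have Js : forall a b, J a b = J b a by move=> a b; rewrite -{1}JT mxE.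
pose S i := \sum_j J i j * l j 0.
have e1 : \sum_(i < n) \sum_(i0 < n) J i0 i * (l i0 0 * h i 0 + l i 0 * h i0 0)
   = 2 * \sum_i h i 0 * S i.
  rewrite (eq_bigr (fun i => \sum_(i0 < n) J i0 i * l i0 0 * h i 0 + \sum_(i0 < n) J i0 i * l i 0 * h i0 0)); last first.
    by move=> i _; rewrite -big_split /=; apply: eq_bigr => j _; ring.
  rewrite big_split /= [X in _ + X]exchange_big /= mulr2n mulrDl mul1r.
  congr (_ + _); apply: eq_bigr => i _; rewrite /S big_distrr /=; apply: eq_bigr => j _.
    by rewrite Js; ring.
  by ring.
rewrite e1.
have e2 : beta / 4 * \sum_(i < n) 4 * l i 0 ^+ 3 * h i 0 = \sum_i h i 0 * (beta * l i 0 ^+ 3).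
  by rewrite big_distrr /=; apply: eq_bigr => i _; field.
have e3 : alpha / 2 * \sum_(i < n) 2 * l i 0 ^+ 1 * h i 0 = \sum_i h i 0 * (alpha * l i 0).
  by rewrite big_distrr /=; apply: eq_bigr => i _; field.
rewrite e2 e3 mulrA mulVf ?pnatr_eq0 // mul1r -!sumrB big1 // => i _.
by rewrite Hl /S; ring.
Qed.
End Crit2.

Section OneD.
Variable R : realType.

Lemma gap1 (a : R) (s : seq R) : exists2 g : R, 0 < g &
  forall z, z \in s -> z != a -> 3%:R * g <= `|a - z|.
Proof.
elim: s => [|b t [g g0 Hg]]; first by exists 1.
case: (eqVneq b a) => [ba|ba].
  exists g => // z; rewrite inE => /orP[/eqP->|zt]; first by rewrite ba eqxx.
  exact: Hg.
exists (Order.min g (`|a - b| / 3%:R)).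
  rewrite lt_min g0 /= divr_gt0 // normr_gt0 subr_eq0 eq_sym //.
move=> z; rewrite inE => /orP[/eqP->|zt] za.
  have : Order.min g (`|a - b| / 3%:R) <= `|a - b| / 3%:R by rewrite ge_min lexx orbT.
  rewrite ler_pdivlMr ?ltr0n // => H; by rewrite mulrC.
apply: le_trans (Hg z zt za); rewrite ler_pM2l ?ltr0n //.
by rewrite ge_min lexx.
Qed.

Lemma gap (s : seq R) : exists2 g : R, 0 < g &
  forall z z', z \in s -> z' \in s -> z != z' -> 3%:R * g <= `|z - z'|.
Proof.
elim: s => [|a t [g g0 Hg]]; first by exists 1.
have [h h0 Hh] := gap1 a t.
exists (Order.min g h); first by rewrite lt_min g0 h0.
have mg : Order.min g h <= g by rewrite ge_min lexx.
have mh : Order.min g h <= h by rewrite ge_min lexx orbT.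
have m3 : forall x y : R, 0 < x -> x <= y -> 3%:R * x <= 3%:R * y.
  by move=> x y _ xy; rewrite ler_pM2l ?ltr0n.
have mgt0 : 0 < Order.min g h by rewrite lt_min g0 h0.
move=> z z'; rewrite !inE => /orP[/eqP->|zt] /orP[/eqP->|z't] zz'.
- by rewrite eqxx in zz'.
- by apply: le_trans (Hh z' z't _); [exact: m3 | by rewrite eq_sym].
- by rewrite distrC; apply: le_trans (Hh z zt _); [exact: m3 | by []].
- by apply: le_trans (Hg z z' zt z't zz'); exact: m3.
Qed.

Lemma prod_small (s : seq R) (t e : R) : 0 < e ->
  \prod_(z <- s) `|t - z| < e ^+ size s -> exists2 z, z \in s & `|t - z| < e.
Proof.
move=> e0 H; case: (pselect (exists2 z, z \in s & `|t - z| < e)) => // Hn; exfalso.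
have : e ^+ size s <= \prod_(z <- s) `|t - z|; last by rewrite leNgt H.
have Hall : forall z, z \in s -> e <= `|t - z|.
  move=> z zs; rewrite leNgt; apply/negP => Hz; apply: Hn; by exists z.
elim: s Hall {H Hn} => [|a s IH] Hall; first by rewrite big_nil expr0.
rewrite big_cons /= exprS; apply: ler_pM; [exact: ltW | exact: exprn_ge0 (ltW e0) | |].
  by apply: Hall; rewrite inE eqxx.
by apply: IH => z zs; apply: Hall; rewrite inE zs orbT.
Qed.

Lemma eventuallyP (P : nat -> Prop) :
  (\forall k \near \oo, P k) -> exists N, forall k, (N <= k)%N -> P k.
Proof. by move=> [N _ HN]; exists N => k kN; apply: HN. Qed.

Lemma conv1D (u : nat -> R) (s : seq R) :
  (fun k => u k.+1 - u k) @ \oo --> 0 ->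
  (fun k => \prod_(z <- s) `|u k - z|) @ \oo --> 0 ->
  exists z : R, u @ \oo --> z.
Proof.
move=> Hd Hp.
have [g g0 Hg] := gap s.
have ev : forall e : R, 0 < e -> exists N, forall k, (N <= k)%N ->
    exists2 z, z \in s & `|u k - z| < e.
  move=> e e0.
  have /cvgrPdist_lt /(_ (e ^+ size s)) := Hp.
  case/(_ (exprn_gt0 _ e0))/eventuallyP => N HN; exists N => k kN.
  apply: prod_small => //; move: (HN k kN); rewrite sub0r normrN.
  by rewrite ger0_norm // prodr_ge0.
have [N1 HN1] : exists N, forall k, (N <= k)%N -> `|u k.+1 - u k| < g.
  have /cvgrPdist_lt /(_ g g0) := Hd.
  case/eventuallyP => N HN; exists N => k kN.
  by move: (HN k kN); rewrite sub0r normrN.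
have [N2 HN2] := ev g g0.
pose K := maxn N1 N2.
have [zs zss Hzs] := HN2 K (leq_maxr _ _).
have tri : forall a b c d : R, `|a - d| <= `|a - b| + `|b - c| + `|c - d|.
  move=> a b c d; apply: le_trans (ler_distD b a d) _.
  by rewrite -addrA lerD2l ler_distD.
have stay : forall k, (K <= k)%N -> `|u k - zs| < g.
  elim=> [|k IH] Kk.
    by move: Kk; rewrite leqn0 => /eqP <-.
  case: (leqP K k) => Kk'; last first.
    have -> : k.+1 = K by apply/eqP; rewrite eqn_leq Kk Kk'.
    exact: Hzs.
  have Hk := IH Kk'.
  have [z' z's Hz'] := HN2 k.+1 (leq_trans (leq_maxr _ _) Kk).
  have Hstep := HN1 k (leq_trans (leq_maxl _ _) Kk').
  case: (eqVneq z' zs) => [<-|zne]; first by [].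
  have := Hg _ _ z's zss zne.
  have := tri z' (u k.+1) (u k) zs.
  rewrite distrC in Hz'.
  move=> H1 H2; have : 3%:R * g < 3%:R * g.
    apply: le_lt_trans H2 _; apply: le_lt_trans H1 _.
    have -> : 3%:R * g = g + g + g by ring.
    by rewrite ltrD // ltrD.
  by rewrite ltxx.
exists zs; apply/cvgrPdist_lt => e e0.
have mgt : 0 < Order.min e g by rewrite lt_min e0 g0.
have [N3 HN3] := ev (Order.min e g) mgt.
exists (maxn K N3) => // k /= kN.
have [z zs' Hz] := HN3 k (leq_trans (leq_maxr _ _) kN).
have Hk := stay k (leq_trans (leq_maxl _ _) kN).
have me : Order.min e g <= e by rewrite ge_min lexx.
have mg : Order.min e g <= g by rewrite ge_min lexx orbT.
case: (eqVneq z zs) => [ezs|zne].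
  by rewrite distrC -ezs; apply: lt_le_trans Hz me.
exfalso.
have := Hg _ _ zs' zss zne.
have H1 : `|z - zs| <= `|z - u k| + `|u k - zs| by apply: ler_distD.
rewrite distrC in Hz.
move=> H2; have : 3%:R * g < 3%:R * g.
  apply: le_lt_trans H2 _; apply: le_lt_trans H1 _.
  have -> : 3%:R * g = g + g + g by ring.
  apply: lt_le_trans (_ : g + g <= _); last by rewrite lerDl ltW.
  by rewrite ltrD // (lt_le_trans Hz mg).
by rewrite ltxx.
Qed.

End OneD.

Section PolyLB.
Variable R : realType.

Lemma poly_lb (B : R) (p : {poly R}) : p != 0 ->
  exists s : seq R, exists2 c : R, 0 < c &
    forall t, `|t| <= B -> c * \prod_(z <- s) `|t - z| <= `|p.[t]|.
Proof.
move: {2}(size p) (leqnn (size p)) => m; elim: m p => [|m IH] p.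
  by rewrite leqn0 size_poly_eq0 => /eqP-> ; rewrite eqxx.
move=> sz p0.
case: (pselect (exists z, root p z)) => [[z rz]|nr].
  have [q pq] := factor_theorem p z rz.
  have q0 : q != 0 by apply: contraNneq p0 => q0; rewrite pq q0 mul0r.
  have szq : (size q <= m)%N.
    have : size p = (size q).+1.
      by rewrite pq size_mul ?polyXsubC_eq0 // size_XsubC addn2.
    by move=> e; rewrite e ltnS in sz.
  have [s [c c0 Hc]] := IH q szq q0.
  exists (z :: s), c => // t tB.
  rewrite big_cons pq hornerM !hornerE normrM.
  have H := Hc t tB; have h0 := normr_ge0 (t - z).
  set P := \prod_(j <- s) `|t - j|; set Q := `|q.[t]|; set T := `|t - z|.
  rewrite -[X in X <= _]/((c * T) * P).
  by rewrite -mulrA mulrCA [Q * T]mulrC ler_wpM2l.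
case: (ltP B 0) => B0.
  exists [::], 1 => // t tB; exfalso.
  by move: (le_lt_trans (normr_ge0 t) (le_lt_trans tB B0)); rewrite ltxx.
have mB : - B <= B by rewrite -subr_ge0 opprK -mulr2n mulrn_wge0.
have cont : {within `[- B, B], continuous (fun t => `|p.[t]|)}.
  apply: continuous_subspaceT => t.
  apply: continuous_comp; first exact: continuous_horner.
  exact: norm_continuous.
have [c0 c0in Hc0] := EVT_min mB cont.
exists [::], `|p.[c0]|.
  rewrite normr_gt0; apply/negP => /eqP pc; apply: nr; exists c0.
  by rewrite /root pc.
move=> t tB; rewrite big_nil mulr1; apply: Hc0.
by rewrite in_itv /= -ler_norml.
Qed.

End PolyLB.

Section PD.
Variable R : realType.
Variable n : nat.
Implicit Types (M : 'M[R]_n) (v w c : 'rV[R]_n).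

Definition bf M v w := \sum_i \sum_j v 0 i * M i j * w 0 j.
Definition nsq v := \sum_i (v 0 i) ^+ 2.
Definition ip v w := \sum_i v 0 i * w 0 i.

Lemma bf_expand M c w t : bf M (c + t *: w) (c + t *: w) =
  bf M c c + t * (bf M c w + bf M w c) + t ^+ 2 * bf M w w.
Proof.
rewrite /bf mulrDr !mulr_sumr -!big_split /=; apply: eq_bigr => i _.
rewrite !mulr_sumr -!big_split /=; apply: eq_bigr => j _.
by rewrite !mxE; ring.
Qed.

Lemma nsq_expand c w t : nsq (c + t *: w) = nsq c + t * (2 * ip c w) + t ^+ 2 * nsq w.
Proof.
rewrite /nsq /ip mulr_sumr !mulr_sumr -!big_split /=; apply: eq_bigr => i _.
by rewrite !mxE; ring.
Qed.

Lemma bf_sym M c w : M^T = M -> bf M c w = bf M w c.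
Proof.
move=> MT; rewrite /bf exchange_big /=; apply: eq_bigr => i _; apply: eq_bigr => j _.
by rewrite -{1}MT mxE; ring.
Qed.

Lemma bfZ M v a : bf M (a *: v) (a *: v) = a ^+ 2 * bf M v v.
Proof.
rewrite /bf mulr_sumr; apply: eq_bigr => i _; rewrite mulr_sumr; apply: eq_bigr => j _.
by rewrite !mxE; ring.
Qed.

Lemma nsqZ v a : nsq (a *: v) = a ^+ 2 * nsq v.
Proof. by rewrite /nsq mulr_sumr; apply: eq_bigr => i _; rewrite !mxE; ring. Qed.

Definition rcoord (i : 'I_n) : 'rV[R]_n -> R := fun v => v 0 i.

Lemma rcoord_diff v i : differentiable (rcoord i) v.
Proof. exact: differentiable_coord. Qed.

Lemma cont_bf M : continuous (fun v => bf M v v).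
Proof.
move=> v.
have -> : (fun v => bf M v v) = \sum_i \sum_j M i j *: (rcoord i * rcoord j).
  apply/funext => x; rewrite /bf fct_sumE; apply: eq_bigr => i _.
  rewrite fct_sumE; apply: eq_bigr => j _.
  by rewrite -[RHS]/(M i j * (x 0 i * x 0 j)); ring.
apply: differentiable_continuous.
apply: differentiable_sum => i; apply: differentiable_sum => j.
by apply: differentiableZ; apply: differentiableM; apply: rcoord_diff.
Qed.

Lemma cont_nsq : continuous nsq.
Proof.
move=> v.
have -> : nsq = \sum_i (rcoord i * rcoord i).
  apply/funext => x; rewrite /nsq fct_sumE; apply: eq_bigr => i _.
  by rewrite -[RHS]/(x 0 i * x 0 i) expr2.
apply: differentiable_continuous.
apply: differentiable_sum => i.
by apply: differentiableM; apply: rcoord_diff.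
Qed.

Lemma quad_zero (a b : R) : (forall t, 0 <= a * t + b * t ^+ 2) -> a = 0.
Proof.
move=> H; apply/eqP; apply/negP => /negP a0.
pose e := (`|b| + 1)^-1.
have e0 : 0 < e by rewrite invr_gt0 ltr_pwDr.
have be : b * e <= `|b| * e by rewrite ler_pM2r // ler_norm.
have be1 : `|b| * e < 1.
  by rewrite /e ltr_pdivrMr ?ltr_pwDr // mul1r ltrDl.
have := H (- a * e).
have a2 : 0 < a ^+ 2 by rewrite exprn_even_gt0.
have : a * (- a * e) + b * (- a * e) ^+ 2 = a ^+ 2 * e * (b * e - 1) by ring.
move=> ->; rewrite pmulr_rge0; last by rewrite mulr_gt0.
move=> h.
have h2 : 1 <= b * e by rewrite -subr_ge0.
by have := le_lt_trans (le_trans h2 be) be1; rewrite ltxx.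
Qed.

Lemma nsq_ge0 v : 0 <= nsq v.
Proof. by rewrite /nsq sumr_ge0 // => i _; rewrite sqr_ge0. Qed.

Lemma nsq0_bf M v : nsq v = 0 -> bf M v v = 0.
Proof.
move=> /eqP; rewrite /nsq psumr_eq0 => [/allP Hv|i _]; last by rewrite sqr_ge0.
have z : forall i, v 0 i = 0.
  by move=> i; have /implyP := Hv i (mem_index_enum i); move=> /(_ isT); rewrite sqrf_eq0 => /eqP.
by rewrite /bf big1 // => i _; rewrite big1 // => j _; rewrite z; ring.
Qed.

End PD.

Section PD2.
Variable R : realType.

Lemma pd_bound n (M : 'M[R]_n) : M^T = M -> (forall a, eigenvalue M a -> 0 < a) ->
  exists2 m : R, 0 < m & forall v, m * nsq v <= bf M v v.
Proof.
move=> MT Hev.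
case: n M MT Hev => [|k] M MT Hev.
  by exists 1 => // v; rewrite /nsq /bf !big_ord0 mulr0.
pose S := [set v : 'rV[R]_k.+1 | nsq v = 1].
pose e (i : 'I_k.+1) := \row_(j < k.+1) ((j == i)%:R : R).
have nsqe : forall i, nsq (e i) = 1.
  move=> i; rewrite /nsq (bigD1 i) //= big1 ?addr0; first by rewrite mxE eqxx expr1n.
  by move=> j ji; rewrite mxE (negbTE ji) expr0n.
have S0 : S !=set0 by exists (e ord0); exact: nsqe.
have Scl : closed S.
  have -> : S = (fun v => nsq v) @^-1` [set x | x = 1] by [].
  apply: preimage_closed; last exact: closed_eq.
  by move=> v _; apply: (@cont_nsq R k.+1).
have Scp : compact S.
  have Bc : compact [set v : 'rV[R]_k.+1 | forall i, `[(-1 : R), 1]%classic (v ord0 i)].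
    exact: (@rV_compact R k.+1 (fun _ => `[(-1:R), 1]%classic) (fun _ => @segment_compact R (-1) 1)).
  apply: (subclosed_compact Scl Bc).
  move=> v /= Sv i.
  have : (v ord0 i) ^+ 2 <= 1.
    rewrite -Sv /nsq (bigD1 i) //= lerDl sumr_ge0 // => j _; exact: sqr_ge0.
  move=> h; rewrite /= in_itv /=; apply/andP; split; nra.
have cw : {within S, continuous (fun v => bf M v v)} by apply: continuous_subspaceT; apply: cont_bf.
have [c cS Hc] := EVT_min_rV S0 Scp cw.
have cS' : nsq c = 1 by move: cS; rewrite inE.
pose m := bf M c c.
have Hb : forall v, m * nsq v <= bf M v v.
  move=> v.
  case: (eqVneq (nsq v) 0) => [nv|nv].
    by rewrite nv (nsq0_bf M nv) mulr0.
  have nv0 : 0 < nsq v by rewrite lt0r nv nsq_ge0.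
  pose s := Num.sqrt (nsq v).
  have s0 : 0 < s by rewrite sqrtr_gt0.
  have s2 : s ^+ 2 = nsq v by rewrite sqr_sqrtr // ltW.
  have wS : (s^-1 *: v) \in S.
    by rewrite inE /S /= nsqZ exprVn s2 mulVf.
  have := Hc _ wS; rewrite bfZ exprVn s2 -/m => h.
  rewrite -(ler_pM2l nv0) mulrA (mulfV nv) mul1r in h.
  by rewrite mulrC.
have Heig : c *m M = m *: c.
  apply/rowP => i.
  have H : forall t, 0 <= (2 * (bf M c (e i) - m * ip c (e i))) * t + (bf M (e i) (e i) - m * nsq (e i)) * t ^+ 2.
    move=> t; have := Hb (c + t *: e i).
    rewrite bf_expand nsq_expand cS' (bf_sym (e i) c MT) => h.
    rewrite -subr_ge0 in h; apply: le_trans h _; rewrite le_eqVlt; apply/orP; left; apply/eqP.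
    by rewrite /m; ring.
  have := quad_zero H; move/eqP; rewrite mulf_eq0 pnatr_eq0 /= subr_eq0 => /eqP h.
  have -> : (c *m M) 0 i = bf M c (e i).
    rewrite /bf !mxE; apply: eq_bigr => a _.
    rewrite (bigD1 i) //= big1 ?addr0; first by rewrite mxE eqxx mulr1.
    by move=> j ji; rewrite mxE (negbTE ji) mulr0.
  rewrite h !mxE /ip (bigD1 i) //= big1 ?addr0; first by rewrite mxE eqxx mulr1.
  by move=> j ji; rewrite mxE (negbTE ji) mulr0.
have c0 : c != 0.
  apply/negP => /eqP c0; move: cS'; rewrite c0 /nsq big1 => [/eqP|i _].
    by rewrite eq_sym oner_eq0.
  by rewrite mxE expr0n.
exists m => //; apply: Hev; apply/eigenvalueP; exists c => //.
Qed.

End PD2.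

Section Red.
Variable R : realType.
Variable n : nat.
Variable a : 'M[R]_n.
Variable B : R.
Hypothesis B0 : 0 <= B.
Implicit Types x : 'cV[R]_n.

Definition res x (i : 'I_n) := x i 0 ^+ 3 - \sum_j a i j * x j 0.
Definition rnorm x := \sum_i `|res x i|.
Definition mono (e : 'I_n -> nat) x := \prod_i x i 0 ^+ e i.
Definition Eset := {ffun 'I_n -> 'I_3}.
Definition monoE (f : Eset) x := \prod_i x i 0 ^+ f i.
Definition bnd x := forall i, `|x i 0| <= B.

Lemma rnorm_ge0 x : 0 <= rnorm x.
Proof. by rewrite sumr_ge0 // => i _. Qed.

Lemma res_le x i : `|res x i| <= rnorm x.
Proof. by rewrite /rnorm (bigD1 i) //= lerDl sumr_ge0. Qed.

Lemma mono_bnd e x : bnd x -> `|mono e x| <= \prod_i B ^+ e i.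
Proof.
move=> bx; rewrite /mono normr_prod; apply: ler_prod => i _.
rewrite normrX exprn_ge0 //=; apply: lerXn2r; rewrite ?nnegrE //; exact: bx.
Qed.

Definition red_prop (e : 'I_n -> nat) := exists c : Eset -> R, exists K : R,
  forall x, bnd x -> `|mono e x - \sum_f c f * monoE f x| <= K * rnorm x.

Lemma red_small (e : 'I_n -> nat) : (forall i, e i < 3)%N -> red_prop e.
Proof.
move=> He.
pose f0 : Eset := [ffun i => inord (e i)].
exists (fun f => (f == f0)%:R), 0 => x bx.
rewrite mul0r (bigD1 f0) //= eqxx mul1r big1 ?addr0.
  rewrite /mono /monoE.
  have -> : \prod_i x i 0 ^+ f0 i = \prod_i x i 0 ^+ e i.
    by apply: eq_bigr => i _; rewrite ffunE inordK.
  by rewrite subrr normr0.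
by move=> f /negbTE ->; rewrite mul0r.
Qed.

Lemma red_all (D : nat) (e : 'I_n -> nat) : (\sum_i e i <= D)%N -> red_prop e.
Proof.
elim: D e => [|D IH] e He.
  apply: red_small => i; move: He; rewrite leqn0 sum_nat_eq0 => /forallP /(_ i).
  by move=> /implyP /(_ isT) /eqP ->.
case: (pselect (forall i, e i < 3)%N) => [Hs|Hns]; first exact: red_small.
have [i ei] : exists i, (3 <= e i)%N.
  apply: contrapT => Hn; apply: Hns => i; rewrite ltnNge; apply/negP => h.
  by apply: Hn; exists i.
pose e' := fun l => if l == i then (e i - 3)%N else e l.
pose ek := fun (k : 'I_n) l => (e' l + (l == k))%N.
have sume : (\sum_l e l = \sum_l e' l + 3)%N.
  rewrite (bigD1 i) //= [in RHS](bigD1 i) //= /e' eqxx -addnA [(_ + 3)%N]addnC addnA subnK //.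
  congr (_ + _)%N; apply: eq_bigr => l /negbTE li; by rewrite li.
have sumk : forall k, (\sum_l ek k l = \sum_l e' l + 1)%N.
  move=> k; rewrite /ek big_split /=; congr (_ + _)%N.
  by rewrite (bigD1 k) //= eqxx big1 // => l /negbTE ->.
have Hk : forall k, red_prop (ek k).
  move=> k; apply: IH; rewrite sumk; move: He; rewrite sume.
  by rewrite addnS ltnS => h; apply: leq_trans h; rewrite leq_add2l.
have [cK HcK] := choice Hk.
have [KK HKK] := choice HcK.
exists (fun f => \sum_k a i k * cK k f), (\prod_l B ^+ e' l + \sum_k `|a i k| * KK k) => x bx.
have me : mono e x = mono e' x * res x i + \sum_k a i k * mono (ek k) x.
  have m1 : mono e x = mono e' x * x i 0 ^+ 3.
    rewrite /mono (bigD1 i) //= [in RHS](bigD1 i) //= /e' eqxx.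
    rewrite -mulrA [_ * x i 0 ^+ 3]mulrC mulrA -exprD subnK //.
    congr (_ * _); apply: eq_bigr => l /negbTE li; by rewrite li.
  have m2 : forall k, mono (ek k) x = mono e' x * x k 0.
    move=> k; rewrite /mono /ek.
    rewrite (eq_bigr (fun l => x l 0 ^+ e' l * x l 0 ^+ (l == k))); last by move=> l _; rewrite exprD.
    rewrite big_split /=; congr (_ * _).
    rewrite (bigD1 k) //= eqxx expr1 [X in _ * X]big1 ?mulr1 // => l /negbTE ->.
    by rewrite expr0.
  rewrite m1 /res.
  have -> : \sum_k a i k * mono (ek k) x = mono e' x * \sum_k a i k * x k 0.
    by rewrite mulr_sumr; apply: eq_bigr => k _; rewrite m2; ring.
  by ring.
have -> : mono e x - \sum_f (\sum_k a i k * cK k f) * monoE f x =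
   mono e' x * res x i + \sum_k a i k * (mono (ek k) x - \sum_f cK k f * monoE f x).
  rewrite me -addrA; congr (_ + _).
  rewrite [RHS](eq_bigr (fun k => a i k * mono (ek k) x - \sum_f a i k * cK k f * monoE f x)); last first.
    by move=> k _; rewrite mulrBr mulr_sumr; congr (_ - _); apply: eq_bigr => f _; ring.
  rewrite sumrB; congr (_ - _).
  rewrite exchange_big /=; apply: eq_bigr => f _; rewrite mulr_suml; apply: eq_bigr => k _; ring.
apply: le_trans (ler_normD _ _) _.
rewrite mulrDl; apply: lerD.
  rewrite normrM; apply: ler_pM => //; [exact: mono_bnd | exact: res_le].
apply: le_trans (ler_norm_sum _ _ _) _.
rewrite mulr_suml; apply: ler_sum => k _.
by rewrite normrM -mulrA; apply: ler_wpM2l => //; apply: HKK.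
Qed.

End Red.

Section Red2.
Variable R : realType.
Variable n : nat.
Variable a : 'M[R]_n.
Variable B : R.
Hypothesis B0 : 0 <= B.

Lemma poly_exists (j : 'I_n) : exists p : {poly R}, p != 0 /\
  exists K : R, forall x, bnd B x -> `|p.[x j 0]| <= K * rnorm a x.
Proof.
pose N := #|{: Eset n}|.
pose ea (t : 'I_N.+1) := fun l : 'I_n => if l == j then (t : nat) else 0%N.
have Hr : forall t : 'I_N.+1, red_prop a B (ea t).
  move=> t; apply: (@red_all R n a B B0 t).
  rewrite (bigD1 j) //= big1 ?addn0 /ea ?eqxx // => l /negbTE ->.
  by [].
have [C HC] := choice Hr.
have [Ks HKs] := choice HC.
pose Cm : 'M[R]_(N.+1, N) := \matrix_(t, b) C t (enum_val b).
have K0 : kermx Cm != 0.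
  rewrite -mxrank_eq0 mxrank_ker subn_eq0 -ltnNge ltnS; exact: rank_leq_col.
have [r rn0] : exists r, row r (kermx Cm) != 0.
  apply: contrapT => Hn; move/negP: K0; apply; apply/eqP/row_matrixP => r.
  rewrite row0; apply/eqP; apply: contrapT => h; apply: Hn; exists r; exact/negP.
pose lam := row r (kermx Cm).
have lamC : lam *m Cm = 0 by rewrite /lam -row_mul mulmx_ker row0.
pose p : {poly R} := \poly_(t < N.+1) lam 0 (inord t).
exists p; split.
  apply/negP => /eqP p0; move/negP: rn0; apply; apply/eqP/rowP => t.
  have := congr1 (fun q : {poly R} => q`_t) p0.
  by rewrite coef_poly ltn_ord inord_val coef0 !mxE => ->.
exists (\sum_t `|lam 0 t| * Ks t) => x bx.
rewrite horner_poly.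
have me : forall t : 'I_N.+1, x j 0 ^+ t = mono (ea t) x.
  move=> t; rewrite /mono (bigD1 j) //= /ea eqxx big1 ?mulr1 // => l /negbTE ->.
  by rewrite expr0.
have -> : \sum_(t < N.+1) lam 0 (inord t) * x j 0 ^+ t =
   \sum_t lam 0 t * (mono (ea t) x - \sum_f C t f * monoE f x).
  rewrite [RHS](eq_bigr (fun t => lam 0 t * mono (ea t) x - \sum_f lam 0 t * C t f * monoE f x)); last first.
    by move=> t _; rewrite mulrBr mulr_sumr; congr (_ - _); apply: eq_bigr => f _; ring.
  rewrite sumrB exchange_big /=.
  rewrite [X in _ = _ - X]big1 ?subr0.
    by apply: eq_bigr => t _; rewrite inord_val me.
  move=> f _; rewrite -mulr_suml.
  have -> : \sum_t lam 0 t * C t f = (lam *m Cm) 0 (enum_rank f).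
    by rewrite !mxE; apply: eq_bigr => t _; rewrite !mxE enum_rankK.
  by rewrite lamC mxE mul0r.
apply: le_trans (ler_norm_sum _ _ _) _.
rewrite mulr_suml; apply: ler_sum => t _.
by rewrite normrM -mulrA; apply: ler_wpM2l => //; apply: HKs.
Qed.

End Red2.

Section Cbrt.
Variable R : realType.

Lemma cbrt3 (y : R) : cbrt y ^+ 3 = y.
Proof.
rewrite /cbrt exprMn.
have -> : (`|y| `^ 3%:R^-1) ^+ 3 = `|y|.
  rewrite -powR_mulrn ?powR_ge0 // -powRrM mulVf ?pnatr_eq0 //.
  by rewrite powRr1.
case: (eqVneq y 0) => [->|y0]; first by rewrite sgr0 expr0n mul0r.
by rewrite sgr_odd // /= expr1 mulr_sg_norm.
Qed.

End Cbrt.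

Lemma cube_le (R : realType) (u v : R) : 0 <= u -> 0 <= v -> u ^+ 3 <= v ^+ 3 -> u <= v.
Proof.
move=> u0 v0 h; rewrite leNgt; apply/negP => vu.
have : v ^+ 3 < u ^+ 3 by rewrite ltrXn2r.
by rewrite ltNge h.
Qed.

Section Dyn.
Variable R : realType.
Variable n : nat.
Variables (J : 'M[R]_n) (alpha beta : R) (x0 : 'cV[R]_n).
Hypothesis JT : J^T = J.
Hypothesis beta0 : 0 < beta.

Definition Am := J + alpha%:M.
Definition am := beta^-1 *: Am.
Definition xs k := doch J alpha beta x0 k.

Lemma x_step k i : xs k.+1 i 0 ^+ 3 = \sum_j am i j * xs k j 0.
Proof.
rewrite /xs /doch iterS -/(doch J alpha beta x0 k) /phi mxE cbrt3 !mxE big_distrr /=.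
by apply: eq_bigr => j _; rewrite /am /Am !mxE mulrA.
Qed.

Definition Tn k := \sum_i `|xs k i 0|.

Lemma bounded_xs : exists2 B : R, 0 <= B & forall k i, `|xs k i 0| <= B.
Proof.
pose C := \sum_i \sum_j `|am i j|.
have C0 : 0 <= C by rewrite sumr_ge0 // => i _; rewrite sumr_ge0.
have aC : forall i j, `|am i j| <= C.
  move=> i j; rewrite /C (bigD1 i) //= (bigD1 j) //= -addrA lerDl addr_ge0 //.
    by rewrite sumr_ge0.
  by rewrite sumr_ge0 // => l _; rewrite sumr_ge0.
pose N1 : R := (n.+1)%:R.
have N10 : 0 < N1 by rewrite ltr0n.
pose Bt := Tn 0 + C * N1 ^+ 3 + 1.
have T0 : forall k, 0 <= Tn k by move=> k; rewrite sumr_ge0.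
have Bt1 : 1 <= Bt by rewrite lerDr addr_ge0 // mulr_ge0 // exprn_ge0 // ltW.
have stepb : forall k i, `|xs k.+1 i 0| ^+ 3 <= C * Tn k.
  move=> k i; rewrite -normrX x_step.
  apply: le_trans (ler_norm_sum _ _ _) _.
  rewrite /Tn mulr_sumr; apply: ler_sum => j _; rewrite normrM.
  by apply: ler_wpM2r => //.
have TB : forall k, Tn k <= Bt.
  elim=> [|k IH]; first by rewrite /Bt -addrA lerDl addr_ge0 // mulr_ge0 // exprn_ge0 // ltW.
  have each : forall i, `|xs k.+1 i 0| <= Bt / N1.
    move=> i; apply: cube_le => //; first by rewrite divr_ge0 ?(le_trans ler01 Bt1) ?ltW.
    apply: le_trans (stepb k i) _.
    apply: (@le_trans _ _ (C * Bt)); first by apply: ler_wpM2l.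
    rewrite expr_div_n ler_pdivlMr ?exprn_gt0 //.
    have h1 : C * N1 ^+ 3 <= Bt by rewrite /Bt; have := T0 0; lra.
    have h2 : Bt <= Bt ^+ 2 by rewrite expr2 ler_peMr // (le_trans ler01 Bt1).
    have -> : Bt ^+ 3 = Bt * Bt ^+ 2 by rewrite exprS.
    rewrite mulrAC [X in _ <= X]mulrC ler_wpM2r ?(le_trans ler01 Bt1) //.
    exact: le_trans h1 h2.
  rewrite /Tn; apply: le_trans (ler_sum _ (fun i _ => each i)) _.
  rewrite sumr_const card_ord -mulr_natr.
  rewrite -mulrA -[X in _ <= X]mulr1 ler_wpM2l ?(le_trans ler01 Bt1) //.
  by rewrite mulrC ler_pdivrMr // mul1r /N1 ler_nat.
exists Bt; first exact: (le_trans ler01 Bt1).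
move=> k i; apply: le_trans (TB k); rewrite /Tn (bigD1 i) //= lerDl sumr_ge0 // => j _.
Qed.

End Dyn.

Section Desc.
Variable R : realType.
Variable n : nat.

Definition Vf (A : 'M[R]_n) (beta : R) (x : 'cV[R]_n) :=
  beta / 4%:R * \sum_i x i 0 ^+ 4 - 2%:R^-1 * \sum_i \sum_j x i 0 * A i j * x j 0.

Lemma descent (A : 'M[R]_n) (beta : R) (x y : 'cV[R]_n) :
  A^T = A -> 0 < beta ->
  (forall i, beta * y i 0 ^+ 3 = \sum_j A i j * x j 0) ->
  2%:R^-1 * bf A (y - x)^T (y - x)^T <= Vf A beta x - Vf A beta y.
Proof.
move=> AT b0 Hy.
pose d := y - x.
have As : forall i j, A i j = A j i by move=> i j; rewrite -{1}AT mxE.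
have Q : Vf A beta x - Vf A beta y - 2%:R^-1 * bf A (y - x)^T (y - x)^T =
   \sum_i (beta / 4%:R * (x i 0 ^+ 4 - y i 0 ^+ 4) + d i 0 * \sum_j A i j * x j 0).
  have e1 : \sum_i \sum_j y i 0 * A i j * y j 0 - \sum_i \sum_j x i 0 * A i j * x j 0
      - bf A (y - x)^T (y - x)^T =
      \sum_i \sum_j d i 0 * A i j * x j 0 + \sum_i \sum_j x i 0 * A i j * d j 0.
    rewrite /bf -!sumrB -big_split /=; apply: eq_bigr => i _.
    rewrite -!sumrB -big_split /=; apply: eq_bigr => j _.
    by rewrite /d !mxE; ring.
  have e2 : \sum_i \sum_j x i 0 * A i j * d j 0 = \sum_i \sum_j d i 0 * A i j * x j 0.
    rewrite exchange_big /=; apply: eq_bigr => i _; apply: eq_bigr => j _.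
    by rewrite As; ring.
  rewrite e2 in e1.
  have e3 : \sum_i (beta / 4%:R * (x i 0 ^+ 4 - y i 0 ^+ 4) + d i 0 * \sum_j A i j * x j 0)
     = beta / 4%:R * (\sum_i x i 0 ^+ 4 - \sum_i y i 0 ^+ 4) + \sum_i \sum_j d i 0 * A i j * x j 0.
    rewrite big_split /= -mulr_sumr -sumrB; congr (_ + _).
    by apply: eq_bigr => i _; rewrite mulr_sumr; apply: eq_bigr => j _; ring.
  rewrite e3 /Vf.
  lra.
rewrite -subr_ge0 Q sumr_ge0 // => i _.
rewrite -Hy /d !mxE.
set u := x i 0; set v := y i 0.
have -> : beta / 4%:R * (u ^+ 4 - v ^+ 4) + (v - u) * (beta * v ^+ 3)
   = beta / 4%:R * ((v - u) ^+ 2 * ((u + v) ^+ 2 + 2%:R * v ^+ 2)) by field.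
apply: mulr_ge0; first by rewrite divr_ge0 // ltW.
apply: mulr_ge0; first exact: sqr_ge0.
by apply: addr_ge0; [exact: sqr_ge0 | apply: mulr_ge0; [exact: ler0n | exact: sqr_ge0]].
Qed.

End Desc.

Section Aux.
Variable R : realType.

Lemma cvg_sumR (I : finType) (f : I -> nat -> R) (l : I -> R) :
  (forall i, f i @ \oo --> l i) -> (fun k => \sum_i f i k) @ \oo --> \sum_i l i.
Proof.
move=> H; rewrite -fct_sumE.
apply: (@big_ind2 _ _ (fun (F : nat -> R) (L : R) => F @ \oo --> L)).
- exact: cvg_cst.
- by move=> F1 L1 F2 L2 h1 h2; apply: cvgD.
- by move=> i _; apply: H.
Qed.

Lemma squeeze0 (v w : nat -> R) : (forall k, 0 <= v k <= w k) ->
  w @ \oo --> 0 -> v @ \oo --> 0.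
Proof.
move=> H Hw; apply: (@squeeze_cvgr _ _ _ _ (fun=> 0) w v) => //.
  exact: nearW.
exact: cvg_cst.
Qed.

Lemma series_to0 (u : nat -> R) (C : R) : (forall k, 0 <= u k) ->
  (forall N, \sum_(k < N) u k <= C) -> u @ \oo --> 0.
Proof.
move=> u0 HC; apply: cvg_series_cvg_0.
apply: nondecreasing_is_cvgn.
  by move=> a b ab; apply: (@nondecreasing_series _ u predT 0) => // k _ _.
exists C => _ [N _ <-]; rewrite /series /= big_mkord; exact: HC.
Qed.

Lemma sq_to0 (v u : nat -> R) : (forall k, v k ^+ 2 <= u k) -> u @ \oo --> 0 ->
  v @ \oo --> 0.
Proof.
move=> H Hu; apply/cvgrPdist_lt => e e0.
have /cvgrPdist_lt /(_ (e ^+ 2) (exprn_gt0 _ e0)) := Hu.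
apply: filterS => k; rewrite !sub0r !normrN => h.
have h2 : `|v k| ^+ 2 < e ^+ 2.
  rewrite real_normK ?num_real //; apply: le_lt_trans (H k) _.
  exact: le_lt_trans (ler_norm _) h.
rewrite ltNge; apply/negP => h3.
have := @lerXn2r _ 2 e `|v k|; rewrite !nnegrE (ltW e0) normr_ge0 => /(_ isT isT h3) h4.
by have := le_lt_trans h4 h2; rewrite ltxx.
Qed.

End Aux.

Section MxC.
Variable R : realType.
Variable n : nat.

Lemma mx_norm_lt (x : 'cV[R]_n) (e : R) : 0 < e -> (forall i, `|x i 0| < e) -> `|x| < e.
Proof.
move=> e0 H.
have -> : `|x| = mx_norm x by [].
rewrite mx_normrE; apply/bigmax_ltP; split => // -[i j] _ /=.
by rewrite (ord1 j); apply: H.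
Qed.

Lemma cvg_entries (X : nat -> 'cV[R]_n) (l : 'cV[R]_n) :
  (forall i, (fun k => X k i 0) @ \oo --> l i 0) -> X @ \oo --> l.
Proof.
move=> H; apply/cvgrPdist_lt => e e0.
have Hi : forall i, exists N, forall k, (N <= k)%N -> `|l i 0 - X k i 0| < e.
  move=> i; have /cvgrPdist_lt /(_ e e0) := H i.
  by case/eventuallyP => N HN; exists N.
have [Ns HNs] := choice Hi.
exists (\max_i Ns i) => // k /= kN.
have -> : l - X k = \col_i (l i 0 - X k i 0).
  by apply/colP => i; rewrite !mxE.
apply: mx_norm_lt => // i; rewrite mxE; apply: HNs.
by apply: leq_trans kN; apply: leq_bigmax.
Qed.

End MxC.

Section Main.
Variable R : realType.
Variable n : nat.
Variables (J : 'M[R]_n) (alpha beta : R) (x0 : 'cV[R]_n).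
Hypothesis JT : J^T = J.
Hypothesis b0 : 0 < beta.
Hypothesis Hev : forall a : R, eigenvalue (J + alpha%:M) a -> 0 < a.

Local Notation A := (Am J alpha).
Local Notation a := (am J alpha beta).
Local Notation x := (xs J alpha beta x0).

Lemma AT : A^T = A.
Proof. by apply/matrixP => i j; rewrite /Am !mxE -{1}JT !mxE eq_sym. Qed.

Lemma Hy k i : beta * x k.+1 i 0 ^+ 3 = \sum_j A i j * x k j 0.
Proof.
rewrite x_step mulr_sumr; apply: eq_bigr => j _.
rewrite /am mxE; field; by rewrite gt_eqF.
Qed.

Definition dd k := x k.+1 - x k.

Lemma nsq_to0 : (fun k => nsq (dd k)^T) @ \oo --> 0.
Proof.
have [m m0 Hm] := pd_bound AT Hev.
have [B B0 HB] := bounded_xs J alpha beta x0.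
have Hdesc : forall k, m / 2%:R * nsq (dd k)^T <= Vf A beta (x k) - Vf A beta (x k.+1).
  move=> k; apply: le_trans (descent AT b0 (Hy k)).
  rewrite /dd mulrAC [2%:R^-1 * _]mulrC; apply: ler_wpM2r; first by rewrite invr_ge0 ler0n.
  exact: Hm.
pose Vb := 2%:R^-1 * \sum_i \sum_j `|A i j| * B ^+ 2.
have Vlb : forall k, - Vb <= Vf A beta (x k).
  move=> k; rewrite /Vf /Vb.
  have h1 : 0 <= beta / 4%:R * \sum_i x k i 0 ^+ 4.
    apply: mulr_ge0; first by rewrite divr_ge0 // ltW.
    by rewrite sumr_ge0 // => i _; rewrite exprn_even_ge0.
  have h2 : \sum_i \sum_j x k i 0 * A i j * x k j 0 <= \sum_i \sum_j `|A i j| * B ^+ 2.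
    apply: ler_sum => i _; apply: ler_sum => j _.
    apply: le_trans (ler_norm _) _; rewrite !normrM.
    rewrite mulrAC expr2 [`|A i j| * _]mulrC; apply: ler_wpM2r => //.
    by apply: ler_pM => //; apply: HB.
  have h3 : 0 <= 2%:R^-1 :> R by rewrite invr_ge0 ler0n.
  have := ler_wpM2l h3 h2; lra.
have tele : forall N, \sum_(k < N) m / 2%:R * nsq (dd k)^T <= Vf A beta (x 0) - Vf A beta (x N).
  elim=> [|N IH]; first by rewrite big_ord0 subrr.
  rewrite big_ord_recr /=; have := Hdesc N; lra.
apply: (@series_to0 _ _ ((Vf A beta (x 0) + Vb) / (m / 2%:R))).
  by move=> k; exact: nsq_ge0.
move=> N; have m2 : 0 < m / 2%:R by rewrite divr_gt0 // ltr0n.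
rewrite ler_pdivlMr // mulrC mulr_sumr.
apply: le_trans (tele N) _; have := Vlb N; lra.
Qed.

Lemma dd_to0 j : (fun k => dd k j 0) @ \oo --> 0.
Proof.
apply: (sq_to0 _ nsq_to0) => k.
by rewrite /nsq (bigD1 j) //= [(dd k)^T 0 j]mxE lerDl sumr_ge0 // => i _; rewrite sqr_ge0.
Qed.

Lemma res_bound k i : `|res a (x k.+1) i| <= \sum_j `|a i j| * `|dd k j 0|.
Proof.
rewrite /res x_step -sumrB; apply: le_trans (ler_norm_sum _ _ _) _.
apply: ler_sum => j _; rewrite -mulrBr normrM /dd mxE distrC.
by rewrite !mxE.
Qed.

Lemma rn_to0 : (fun k => rnorm a (x k.+1)) @ \oo --> 0.
Proof.
pose w k := \sum_i \sum_j `|a i j| * `|dd k j 0|.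
have Hw : w @ \oo --> \sum_(i < n) \sum_(j < n) `|a i j| * `|0 : R|.
  apply: (@cvg_sumR R 'I_n (fun i k => \sum_j `|a i j| * `|dd k j 0|) (fun i => \sum_(j < n) `|a i j| * `|0 : R|)) => i.
  apply: (@cvg_sumR R 'I_n (fun j k => `|a i j| * `|dd k j 0|) (fun j => `|a i j| * `|0 : R|)) => j.
  apply: cvgMl_tmp. apply: cvg_norm. exact: dd_to0.
have e : \sum_(i < n) \sum_(j < n) `|a i j| * `|0 : R| = 0.
  by rewrite big1 // => i _; rewrite big1 // => j _; rewrite normr0 mulr0.
rewrite e in Hw; apply: (squeeze0 _ Hw) => k.
rewrite rnorm_ge0 /=; apply: ler_sum => i _; exact: res_bound.
Qed.

Lemma coord_conv j : exists z : R, (fun k => x k j 0) @ \oo --> z.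
Proof.
have [B B0 HB] := bounded_xs J alpha beta x0.
have [p [p0 [K HK]]] := poly_exists a B0 j.
have [s [c c0 Hc]] := poly_lb B p0.
pose u k := x k.+1 j 0.
have Hw : (fun k => K / c * rnorm a (x k.+1)) @ \oo --> 0.
  have h : (fun k => K / c * rnorm a (x k.+1)) @ \oo --> K / c * 0.
    by apply: cvgMl_tmp; exact: rn_to0.
  by rewrite mulr0 in h.
have Hp : (fun k => \prod_(z <- s) `|u k - z|) @ \oo --> 0.
  apply: (squeeze0 _ Hw) => k; apply/andP; split.
    by apply: prodr_ge0 => z _; exact: normr_ge0.
  rewrite mulrAC ler_pdivlMr // mulrC.
  apply: le_trans (Hc _ (HB k.+1 j)) _.
  by apply: HK => i; exact: HB.
have Hd : (fun k => u k.+1 - u k) @ \oo --> 0.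
  have -> : (fun k => u k.+1 - u k) = (fun k => dd k.+1 j 0).
    by apply: funext => k; rewrite /dd /u !mxE.
  by rewrite (cvg_shiftS (fun k => dd k j 0)); exact: dd_to0.
have [z Hz] := conv1D Hd Hp.
by exists z; rewrite -(cvg_shiftS (fun k => x k j 0)); exact: Hz.
Qed.

Lemma main_conv : exists2 l : 'cV[R]_n, x @ \oo --> l &
  forall i, beta * l i 0 ^+ 3 = \sum_j J i j * l j 0 + alpha * l i 0.
Proof.
have [lim Hlim] := choice coord_conv.
pose l := \col_j lim j.
have Hx : x @ \oo --> l by apply: cvg_entries => i; rewrite mxE; exact: Hlim i.
exists l => // i.
have Hs : forall j, (fun k => x k.+1 j 0) @ \oo --> lim j.
  by move=> j; rewrite (cvg_shiftS (fun k => x k j 0)); exact: Hlim.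
have Hr1 : (fun k => res a (x k.+1) i) @ \oo --> 0.
  apply: (@squeeze_cvgr _ _ _ _ (fun k => - rnorm a (x k.+1)) (fun k => rnorm a (x k.+1))).
  - apply: nearW => k; have := res_le a (x k.+1) i; rewrite ler_norml; exact.
  - by rewrite -oppr0; apply: cvgN; exact: rn_to0.
  - exact: rn_to0.
have Hr2 : (fun k => res a (x k.+1) i) @ \oo --> lim i ^+ 3 - \sum_j a i j * lim j.
  apply: cvgB.
    rewrite !exprS expr0 mulr1.
    apply: cvgM; first exact: Hs.
    by apply: cvgM; exact: Hs.
  apply: (@cvg_sumR R 'I_n (fun j k => a i j * x k.+1 j 0) (fun j => a i j * lim j)) => j.
  by apply: cvgMl_tmp; exact: Hs.
have e := cvg_unique (@Rhausdorff R) Hr1 Hr2.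
have ea : \sum_j a i j * lim j = beta^-1 * (\sum_j J i j * lim j + alpha * lim i).
  rewrite (eq_bigr (fun j => beta^-1 * (J i j * lim j) + beta^-1 * (alpha *+ (i == j) * lim j))); last first.
    by move=> j _; rewrite /am /Am !mxE -mulrDr -mulrDl mulrA.
  rewrite big_split /= -mulr_sumr -mulr_sumr -mulrDr; congr (_ * (_ + _)).
  rewrite (bigD1 i) //= eqxx mulr1n big1 ?addr0 // => j /negbTE.
  by rewrite eq_sym => ->; rewrite mulr0n mul0r.
rewrite !mxE.
have e' : lim i ^+ 3 = \sum_j a i j * lim j by apply/eqP; rewrite -subr_eq0 -e.
have -> : \sum_j J i j * l j 0 = \sum_j J i j * lim j by apply: eq_bigr => j _; rewrite mxE.
rewrite e' ea mulrA mulfV ?mul1r //; by rewrite (gt_eqF b0).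
Qed.

End Main.

Theorem theoremS2 (R : realType) (n : nat) (J : 'M[R]_n) (alpha beta : R)
  (x0 : 'cV[R]_n) :
  J^T = J ->
  (forall i, J i i = 0) ->
  0 < alpha -> 0 < beta ->
  (forall a : R, eigenvalue (J + alpha%:M) a -> 0 < a) ->
  exists2 l : 'cV[R]_n,
    doch J alpha beta x0 @ \oo --> l & critical_point (Hfun J alpha beta) l.
Proof.
move=> JT _ _ b0 Hev.
have [l Hl Heq] := @main_conv R n J alpha beta x0 JT b0 Hev.
exists l; first exact: Hl.
exact: crit_of_eq JT Heq.
Qed.
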